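(* Let $\mathbb{X}\subseteq\mathbb{P}^2$ be a $\Bbbk$-configuration of type $(d_1,\dots,d_s)$ defined by subsets $\mathbb{X}_1,\dots,\mathbb{X}_s$ and lines $\mathbb{L}_1,\dots,\mathbb{L}_s$, and let $\mathbb{L}$ be a line with $|\mathbb{L}\cap\mathbb{X}|=d_s$. (i) If $d_s>s$, then $\mathbb{L}\in\{\mathbb{L}_1,\dots,\mathbb{L}_s\}$. (ii) If $\mathbb{L}=\mathbb{L}_i$, then $d_j=d_s-s+j$ for all $j=i,\dots,s$.
   Context: $\Bbbk$ is an algebraically closed field. A $\Bbbk$-configuration of type $(d_1,\dots,d_s)$ is a finite set $\mathbb{X}\subseteq\mathbb{P}^2$ for which there exist integers $1\le d_1<\cdots<d_s$, subsets $\mathbb{X}_1,\dots,\mathbb{X}_s$ of $\mathbb{X}$ and distinct lines $\mathbb{L}_1,\dots,\mathbb{L}_s\subseteq\mathbb{P}^2$ such that (1) $\mathbb{X}=\bigcup_{i=1}^s\mathbb{X}_i$; (2) $|\mathbb{X}_i|=d_i$ and $\mathbb{X}_i\subseteq\mathbb{L}_i$ for each $i$; (3) for $1<i\le s$, $\mathbb{L}_i$ contains no point of $\mathbb{X}_j$ for any $j<i$. We say $\mathbb{X}$ is defined by these subsets and lines. *)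

(* Defs.v *)
From HB Require Import structures.
From mathcomp Require Import all_boot all_order all_algebra.
Set Implicit Arguments. Unset Strict Implicit. Unset Printing Implicit Defensive.
Import GRing.Theory.
Local Open Scope ring_scope.

(* Homogeneous coordinates: a point of P^2 (resp. a line of P^2) is represented
   by a nonzero row vector in K^3 (resp. nonzero linear form, i.e. its
   coefficient row vector); two representatives give the same projective
   object iff they are proportional. *)
Definition proj_same (K : fieldType) (u v : 'rV[K]_3) : Prop :=
  exists2 c : K, c != 0 & v = c *: u.

Definition on_line (K : fieldType) (l p : 'rV[K]_3) : bool :=
  (p *m l^T) 0 0 == 0.

Definition point_set (K : fieldType) (X : seq 'rV[K]_3) : Prop :=
  [/\ uniq X, forall x, x \in X -> x != 0
    & forall x y, x \in X -> y \in X -> proj_same x y -> x = y].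

(* X is a k-configuration of type (d 0, ..., d (s-1)) defined by subsets
   Xs 0, ..., Xs (s-1) and lines Ls 0, ..., Ls (s-1)  (0-based indices;
   paper's index i corresponds to i-1 here). *)
Definition kconfig (K : fieldType) (s : nat) (d : nat -> nat)
    (X : seq 'rV[K]_3) (Xs : nat -> seq 'rV[K]_3) (Ls : nat -> 'rV[K]_3) : Prop :=
  [/\ point_set X /\ (0 < s)%N /\ (1 <= d 0)%N /\
        (forall i, (i.+1 < s)%N -> (d i < d i.+1)%N),
      (forall i, (i < s)%N -> Ls i != 0) /\
      (forall i j, (i < s)%N -> (j < s)%N -> proj_same (Ls i) (Ls j) -> i = j),
      (forall i, (i < s)%N -> {subset Xs i <= X}) /\
      (forall x, x \in X -> exists2 i, (i < s)%N & x \in Xs i),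
      (forall i, (i < s)%N ->
         [/\ uniq (Xs i), size (Xs i) = d i & all (on_line (Ls i)) (Xs i)])
    &
      (forall i j, (j < i)%N -> (i < s)%N ->
         forall x, x \in Xs j -> ~~ on_line (Ls i) x)].

(* Main.v *)
Require Import Defs.
From HB Require Import structures.
From mathcomp Require Import all_boot all_order all_algebra.
From mathcomp Require Import ring.
Set Implicit Arguments. Unset Strict Implicit.
Import GRing.Theory.
Local Open Scope ring_scope.
Section S.
Variable K : fieldType.
Definition i0 : 'I_3 := @Ordinal 3 0 isT.
Definition i1 : 'I_3 := @Ordinal 3 1 isT.
Definition i2 : 'I_3 := @Ordinal 3 2 isT.
Lemma all3 (P : 'I_3 -> Prop) : P i0 -> P i1 -> P i2 -> forall m, P m.
Proof.
move=> H0 H1 H2 [[|[|[|//]]] H].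
- by have -> : Ordinal H = i0 by apply/val_inj.
- by have -> : Ordinal H = i1 by apply/val_inj.
- by have -> : Ordinal H = i2 by apply/val_inj.
Qed.
Definition cf (u : 'rV[K]_3) : 'I_3 -> K := fun m => u 0 m.
Definition dot (l p : 'I_3 -> K) := p i0 * l i0 + p i1 * l i1 + p i2 * l i2.
Lemma on_lineE (l p : 'rV[K]_3) : on_line l p = (dot (cf l) (cf p) == 0).
Proof.
rewrite /on_line !mxE !big_ord_recl big_ord0 !mxE addr0 addrA.
have -> : lift ord0 (lift ord0 (ord0 : 'I_1)) = i2 :> 'I_3 by apply/val_inj.
have -> : lift ord0 (ord0 : 'I_2) = i1 :> 'I_3 by apply/val_inj.
by have -> : ord0 = i0 :> 'I_3 by apply/val_inj.
Qed.
Lemma cf_eq (u v : 'rV[K]_3) : (forall m, cf u m = cf v m) -> u = v.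
Proof. by move=> H; apply/rowP => m; apply: H. Qed.
Lemma cfZ (c : K) (u : 'rV[K]_3) m : cf (c *: u) m = c * cf u m.
Proof. by rewrite /cf mxE. Qed.
Lemma cf0 (u : 'rV[K]_3) : u != 0 -> exists k, cf u k != 0.
Proof.
move=> Hu; case: (boolP [exists k, cf u k != 0]) => [/existsP//|/existsPn H].
case/negP: Hu; apply/eqP/rowP => m; rewrite mxE; move: (H m); rewrite negbK => /eqP.
done.
Qed.
Definition rel (u v : 'I_3 -> K) := forall m n, u m * v n = u n * v m.
Lemma relI (u v : 'I_3 -> K) :
  u i0 * v i1 = u i1 * v i0 -> u i0 * v i2 = u i2 * v i0 ->
  u i1 * v i2 = u i2 * v i1 -> rel u v.
Proof.
move=> H01 H02 H12; apply: all3; apply: all3 => //; rewrite ?H01 ?H02 ?H12 //.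
Qed.
Lemma par (u v : 'I_3 -> K) k : v k != 0 -> rel u v -> forall m, u m = u k / v k * v m.
Proof.
move=> Hk H m; rewrite mulrAC -H; field; exact: Hk.
Qed.
Definition cross (p q : 'I_3 -> K) : 'I_3 -> K := fun m =>
  match val m with
  | 0 => p i1 * q i2 - p i2 * q i1
  | 1 => p i2 * q i0 - p i0 * q i2
  | _ => p i0 * q i1 - p i1 * q i0 end.
Lemma cross_rel (l p q : 'I_3 -> K) : dot l p = 0 -> dot l q = 0 -> rel l (cross p q).
Proof.
rewrite /dot /cross /= => Hp Hq; apply: relI => /=.
- apply/eqP; rewrite -subr_eq0; apply/eqP.
  transitivity (p i2 * dot l q - q i2 * dot l p); first by rewrite /dot; ring.
  by rewrite /dot Hp Hq; ring.
- apply/eqP; rewrite -subr_eq0; apply/eqP.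
  transitivity (q i1 * dot l p - p i1 * dot l q); first by rewrite /dot; ring.
  by rewrite /dot Hp Hq; ring.
- apply/eqP; rewrite -subr_eq0; apply/eqP.
  transitivity (p i0 * dot l q - q i0 * dot l p); first by rewrite /dot; ring.
  by rewrite /dot Hp Hq; ring.
Qed.
Lemma on_lineZ c (l p : 'rV[K]_3) : c != 0 -> on_line (c *: l) p = on_line l p.
Proof.
move=> Hc; rewrite !on_lineE /dot !cfZ.
have -> : cf p i0 * (c * cf l i0) + cf p i1 * (c * cf l i1) + cf p i2 * (c * cf l i2)
  = c * (cf p i0 * cf l i0 + cf p i1 * cf l i1 + cf p i2 * cf l i2) by ring.
by rewrite mulf_eq0 (negbTE Hc).
Qed.
Lemma proj_sym (u v : 'rV[K]_3) : proj_same u v -> proj_same v u.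
Proof.
case=> c Hc ->; exists c^-1; first by rewrite invr_eq0.
by rewrite scalerA mulVf // scale1r.
Qed.
Lemma proj_trans (u v w : 'rV[K]_3) : proj_same u v -> proj_same v w -> proj_same u w.
Proof.
case=> c Hc ->; case=> e He ->; exists (e * c); first by rewrite mulf_neq0.
by rewrite scalerA.
Qed.
Lemma coord0 (u : 'rV[K]_3) : (forall m, cf u m = 0) -> u = 0.
Proof. by move=> H; apply/rowP => m; rewrite mxE; apply: H. Qed.
Lemma eqr_of (x y z : K) : z = 0 -> x - y = z \/ y - x = z -> x = y.
Proof.
move=> -> [/eqP|/eqP]; rewrite subr_eq0 => /eqP //.
Qed.
Lemma two_lines (l1 l2 p q : 'rV[K]_3) : l1 != 0 -> l2 != 0 -> p != 0 -> q != 0 ->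
  ~ proj_same p q -> on_line l1 p -> on_line l1 q -> on_line l2 p -> on_line l2 q ->
  proj_same l1 l2.
Proof.
move=> Hl1 Hl2 Hp Hq Hpq; rewrite !on_lineE => /eqP H1p /eqP H1q /eqP H2p /eqP H2q.
set w := cross (cf p) (cf q).
have [k Hk] : exists k, w k != 0.
  case: (boolP [exists k, w k != 0]) => [/existsP//|/existsPn H].
  have Hw : forall m, w m = 0 by move=> m; move: (H m); rewrite negbK => /eqP.
  have R : rel (cf q) (cf p).
    move: (Hw i0) (Hw i1) (Hw i2); rewrite /w /cross /= => e0 e1 e2.
    apply: relI.
    - apply: (@eqr_of _ _ _ e2); first [by left; ring | by right; ring].
    - apply: (@eqr_of _ _ _ e1); first [by left; ring | by right; ring].
    - apply: (@eqr_of _ _ _ e0); first [by left; ring | by right; ring].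
  have [kp Hkp] := cf0 Hp.
  have E := par Hkp R.
  case: Hpq; exists (cf q kp / cf p kp).
    apply/negP => /eqP Hc; case/negP: Hq; apply/eqP/coord0 => m.
    by rewrite E Hc mul0r.
  by apply: cf_eq => m; rewrite cfZ E.
have E1 := par Hk (cross_rel H1p H1q).
have E2 := par Hk (cross_rel H2p H2q).
have N1 : cf l1 k != 0.
  apply/negP => /eqP Hc; case/negP: Hl1; apply/eqP/coord0 => m.
  by rewrite E1 Hc !mul0r.
have N2 : cf l2 k != 0.
  apply/negP => /eqP Hc; case/negP: Hl2; apply/eqP/coord0 => m.
  by rewrite E2 Hc !mul0r.
exists (cf l2 k / cf l1 k); first by rewrite mulf_neq0 // invr_eq0.
apply: cf_eq => m; rewrite cfZ (E1 m) (E2 m); field.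
by apply/andP; split.
Qed.
End S.
From mathcomp Require Import zify.
From Stdlib Require Import Classical.

Lemma count_le1 (K : fieldType) (L l : 'rV[K]_3) (X S : seq 'rV[K]_3) :
  point_set X -> uniq S -> {subset S <= X} -> all (on_line l) S ->
  L != 0 -> l != 0 -> ~ proj_same L l -> (count (on_line L) S <= 1)%N.
Proof.
case=> _ Xnz Xinj US SX /allP Sl HL Hl HLl; rewrite -size_filter.
have UF : uniq (filter (on_line L) S) by exact: filter_uniq.
have mF : forall z, z \in filter (on_line L) S -> z \in S /\ on_line L z.
  by move=> z; rewrite mem_filter => /andP [].
case E: (filter (on_line L) S) UF mF => [|x [|y t]] //= /andP [Hxy _] mF.
have [xS xL] := mF x (mem_head _ _).
have [yS yL] : y \in S /\ on_line L y by apply: mF; rewrite !inE eqxx orbT.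
exfalso; apply: HLl; apply: (@two_lines _ L l x y) => //.
- exact: Xnz (SX _ xS).
- exact: Xnz (SX _ yS).
- move=> Hp; move: Hxy; rewrite !inE negb_or => /andP [/eqP []].
  exact: Xinj (SX _ xS) (SX _ yS) Hp.
- exact: Sl.
- exact: Sl.
Qed.

Lemma count_union (K : fieldType) (P : pred 'rV[K]_3) (X : seq 'rV[K]_3) Xs s :
  uniq X -> (forall x, x \in X -> exists2 i, (i < s)%N & x \in Xs i) ->
  (count P X <= \sum_(0 <= j < s) count P (Xs j))%N.
Proof.
move=> UX HX.
have -> : (\sum_(0 <= j < s) count P (Xs j) = count P (flatten (map Xs (iota 0 s))))%N.
  by rewrite count_flatten sumnE big_map big_map /index_iota subn0.
rewrite -!size_filter; apply: uniq_leq_size; first exact: filter_uniq.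
move=> x; rewrite !mem_filter => /andP [Px xX]; rewrite Px /=.
have [i Hi xi] := HX x xX.
apply/flattenP; exists (Xs i) => //; apply/map_f; rewrite mem_iota; lia.
Qed.

Unset Implicit Arguments.
Theorem lemma2p5 (K : closedFieldType) (s : nat) (d : nat -> nat)
    (X : seq 'rV[K]_3) (Xs : nat -> seq 'rV[K]_3) (Ls : nat -> 'rV[K]_3)
    (L : 'rV[K]_3) :
  kconfig s d X Xs Ls ->
  L != 0 ->
  count (on_line L) X = d s.-1 ->
  ((s < d s.-1)%N -> exists2 i, (i < s)%N & proj_same L (Ls i)) /\
  (forall i, (i < s)%N -> proj_same L (Ls i) ->
     forall j, (i <= j < s)%N -> d j = (d s.-1 - s + j.+1)%N).
Proof.
case=> [[PX [s0 [d0 dinc]]] [Lnz Linj] [XsX XXs] Hsz H3] HL HC.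
have PX' := PX; case: PX' => UX _ _.
have CU := count_union (on_line L) UX XXs; rewrite HC in CU.
set f := fun j => count (on_line L) (Xs j).
have le1 : forall j, (j < s)%N -> ~ proj_same L (Ls j) -> (f j <= 1)%N.
  move=> j Hj Hn; have [U _ A] := Hsz j Hj.
  exact: (count_le1 PX U (XsX j Hj) A HL (Lnz j Hj) Hn).
have mono : forall a b, (a <= b < s)%N -> (d a + (b - a) <= d b)%N.
  move=> a; elim=> [|b IH] /andP [Hab Hb]; first by move: Hab; rewrite leqn0 => /eqP ->; rewrite addn0.
  case: (ltnP a b.+1) => Hab'.
    have := IH ltac:(lia); have := dinc b Hb; lia.
  have -> : a = b.+1 by lia.
  by rewrite subnn addn0.
split.
  move=> Hs; case: (classic (exists2 i, (i < s)%N & proj_same L (Ls i))) => // Hno.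
  have B : forall n, (n <= s)%N -> (\sum_(0 <= j < n) f j <= n)%N.
    elim=> [|n IH] Hn; first by rewrite big_geq.
    rewrite big_nat_recr //=; have := IH ltac:(lia).
    have := le1 n Hn (fun H => Hno (ex_intro2 _ _ n Hn H)); lia.
  by have := B s (leqnn s); rewrite /f in CU *; lia.
move=> i Hi Hli j Hj.
have f0 : forall j, (j < i)%N -> f j = 0%N.
  move=> k Hk; apply/eqP; rewrite -leqn0 leqNgt -has_count; apply/hasPn => x xk.
  case: Hli => c Hc E; have := H3 _ _ Hk Hi x xk; by rewrite E on_lineZ.
have fi : (f i <= d i)%N.
  have [U <- _] := Hsz i Hi; exact: count_size.
have fg : forall k, (i < k < s)%N -> (f k <= 1)%N.
  move=> k /andP [Hik Hks]; apply: le1 => // Hk.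
  have := Linj i k Hi Hks (proj_trans (proj_sym Hli) Hk); lia.
have B : forall n, (n <= s)%N ->
    (\sum_(0 <= k < n) f k <= (if (n <= i)%N then 0 else d i + (n - i.+1)))%N.
  elim=> [|n IH] Hn; first by rewrite big_geq.
  rewrite big_nat_recr //=; have := IH ltac:(lia).
  case: (ltngtP n i) => Hni.
  - rewrite f0 //; lia.
  - have := fg n ltac:(lia); lia.
  - subst n; move: fi; lia.
have := B s (leqnn s); rewrite (_ : (s <= i)%N = false); last by lia.
rewrite /f in CU * => Bs.
have m1 := mono i j Hj.
have m2 := mono j s.-1 ltac:(lia).
have m3 := mono 0%N s.-1 ltac:(lia).
lia.
Qed.
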